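(* For every (closed) term $P$, $$[\![P]\!] = \{ s \in \Sigma^* \mid \exists M.\ P \overset{s}{\Rightarrow} M \text{ and } M \text{ is not doomed} \}.$$
   Context: Fix a set $\Sigma$ of events. Terms: $P, Q ::= \mathit{STOP} \mid \mathit{FAIL} \mid ?x{:}E \rightarrow P \mid P \,\Box\, Q \mid P \parallel_E Q$, where an event set $E$ is $f(y_1,\dots,y_n)$ with $f : \Sigma^n \to 2^\Sigma$ computable and each $y_i$ an event variable or event; $x$ is bound in $P$ in $?x{:}E\rightarrow P$. Terms are closed, so each $E$ denotes a subset of $\Sigma$; $[e/x]P$ is substitution of event $e$ for $x$. Trace semantics. A trace set is a prefix-closed subset of $\Sigma^*$ (possibly empty); $\varepsilon$ is the empty trace. For a trace set $T$: $eT := \{\varepsilon\} \cup \{et \mid t \in T\}$, $T(e) := \{t \mid et \in T\}$. For $E \subseteq \Sigma$, $\parallel_E$ on trace sets is the unique function with $\varnothing \parallel_E T = T \parallel_E \varnothing = \varnothing$ and, for nonempty $T_1, T_2$, $T_1 \parallel_E T_2 = \bigcup_{e \in E} e(T_1(e) \parallel_E T_2(e)) \cup \bigcup_{e \in \Sigma\setminus E}( e(T_1(e) \parallel_E T_2) \cup e(T_1 \parallel_E T_2(e)))$. The semantics: $[\![\mathit{STOP}]\!] = \{\varepsilon\}$, $[\![\mathit{FAIL}]\!] = \varnothing$, $[\![?x{:}E \rightarrow P]\!] = \{\varepsilon\} \cup \bigcup_{e \in E} e[\![ [e/x]P ]\!]$, $[\![P \Box Q]\!] = [\![P]\!] \cup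 [\![Q]\!]$, $[\![P \parallel_E Q]\!] = [\![P]\!] \parallel_E [\![Q]\!]$. Operational semantics. Actions $a ::= e \mid \tau$, $\tau \notin \Sigma$. Doomed terms: $D ::= \mathit{FAIL} \mid D \Box D \mid D \parallel_E P \mid P \parallel_E D$; viable terms $\hat P, \hat Q$ are non-doomed terms. The internal transition relation $\xrightarrow{a}$ is the least relation closed under: (1) $e \in E \Rightarrow (?x{:}E \rightarrow P) \xrightarrow{e} [e/x]P$; (2) $P \xrightarrow{\tau} P' \Rightarrow P \Box Q \xrightarrow{\tau} P' \Box Q$; (3) $Q \xrightarrow{\tau} Q' \Rightarrow P \Box Q \xrightarrow{\tau} P \Box Q'$; (4) $P \xrightarrow{e} P' \Rightarrow P \Box Q \xrightarrow{e} P'$; (5) $Q \xrightarrow{e} Q' \Rightarrow P \Box Q \xrightarrow{e} Q'$; (6) $P \xrightarrow{a} P'$, $a \notin E$, $\hat Q$ viable $\Rightarrow P \parallel_E \hat Q \xrightarrow{a} P' \parallel_E \hat Q$; (7) $Q \xrightarrow{a} Q'$, $a \notin E$, $\hat P$ viable $\Rightarrow \hat P \parallel_E Q \xrightarrow{a} \hat P \parallel_E Q'$; (8) $\hat P, \hat Q$ viable, $\hat P \xrightarrow{e} P'$, $\hat Q \xrightarrow{e} Q'$, $e \in E$ $\Rightarrow \hat P \parallel_E \hat Q \xrightarrow{e} P' \parallel_E Q'$; (9) $D_1, D_2$ doomed, $D_1 \xrightarrow{\tau} P_1 \Rightarrow D_1 \parallel_E D_2 \xrightarrow{\tau} P_1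 \parallel_E D_2$; (10) $D_1, D_2$ doomed, $D_2 \xrightarrow{\tau} P_2 \Rightarrow D_1 \parallel_E D_2 \xrightarrow{\tau} D_1 \parallel_E P_2$; (11) $\mathit{FAIL} \Box \mathit{FAIL} \xrightarrow{\tau} \mathit{FAIL}$; (12) $\mathit{FAIL} \parallel_E P \xrightarrow{\tau} \mathit{FAIL}$; (13) $P \parallel_E \mathit{FAIL} \xrightarrow{\tau} \mathit{FAIL}$. For $s \in \Sigma^*$, the visible transition $P \overset{s}{\Rightarrow} Q$ holds iff there is a finite sequence (possibly of length zero) of internal transitions $P = P_0 \xrightarrow{a_1} P_1 \cdots \xrightarrow{a_n} P_n = Q$ such that deleting all $\tau$'s from $a_1 \cdots a_n$ yields $s$. *)

(* Defs.v *)
From Stdlib Require Import List Arith.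
Import ListNotations.
Set Implicit Arguments.

Section Calculus.
Variable Sigma : Type.

Inductive arg : Type :=
| AVar : nat -> arg
| AEv : Sigma -> arg.

(* Event set expression E = f(y_1,...,y_n).  f : Sigma^n -> 2^Sigma is
   represented as a function on lists (applied to the list of the n argument
   values), with subsets of Sigma given by (computable) boolean membership. *)
Record evset : Type := EvSet { ev_fun : list Sigma -> Sigma -> bool;
                               ev_args : list arg }.

Inductive term : Type :=
| STOP : term
| FAIL : term
| Pre : nat -> evset -> term -> term   (* ?x:E -> P, x bound in P *)
| Ext : term -> term -> term
| Par : term -> evset -> term -> term.

Definition subst_arg (e : Sigma) (x : nat) (a : arg) : arg :=
  match a with AVar y => if Nat.eqb x y then AEv e else a | AEv _ => a end.

Definition subst_evset (e : Sigma) (x : nat) (E : evset) : evset :=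
  EvSet (ev_fun E) (map (subst_arg e x) (ev_args E)).

Fixpoint subst (e : Sigma) (x : nat) (P : term) : term :=
  match P with
  | STOP => STOP
  | FAIL => FAIL
  | Pre y E Q => Pre y (subst_evset e x E)
                     (if Nat.eqb x y then Q else subst e x Q)
  | Ext P1 P2 => Ext (subst e x P1) (subst e x P2)
  | Par P1 E P2 => Par (subst e x P1) (subst_evset e x E) (subst e x P2)
  end.

Definition arg_closed (bound : list nat) (a : arg) : Prop :=
  match a with AVar y => In y bound | AEv _ => True end.

Definition evset_closed (bound : list nat) (E : evset) : Prop :=
  Forall (arg_closed bound) (ev_args E).

Fixpoint closed_under (bound : list nat) (P : term) : Prop :=
  match P with
  | STOP | FAIL => True
  | Pre y E Q => evset_closed bound E /\ closed_under (y :: bound) Q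
  | Ext P1 P2 => closed_under bound P1 /\ closed_under bound P2
  | Par P1 E P2 => closed_under bound P1 /\ evset_closed bound E /\
                   closed_under bound P2
  end.

Definition closed (P : term) : Prop := closed_under [] P.

Definition arg_val (a : arg) : option Sigma :=
  match a with AVar _ => None | AEv e => Some e end.

Definition in_evset (E : evset) (e : Sigma) : Prop :=
  exists vs, map arg_val (ev_args E) = map Some vs /\ ev_fun E vs e = true.

Definition trace := list Sigma.
Definition traceset := trace -> Prop.

Definition nonempty (T : traceset) : Prop := exists t, T t.
Definition after (T : traceset) (e : Sigma) : traceset := fun t => T (e :: t).

(* T1 ||_E T2, by recursion on the trace, unfolding the defining equation:
   empty if either argument is empty; otherwise the union
   U_{e in E} e(T1(e) || T2(e)) U U_{e notin E} (e(T1(e) || T2) U e(T1 || T2(e))),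
   where eT = {eps} U {et | t in T}. *)
Fixpoint par_tr (E : evset) (T1 T2 : traceset) (t : trace) : Prop :=
  nonempty T1 /\ nonempty T2 /\
  match t with
  | [] => exists e : Sigma, True
  | e :: t' =>
      (in_evset E e /\ par_tr E (after T1 e) (after T2 e) t') \/
      (~ in_evset E e /\
         (par_tr E (after T1 e) T2 t' \/ par_tr E T1 (after T2 e) t'))
  end.

Fixpoint size (P : term) : nat :=
  match P with
  | STOP | FAIL => 1
  | Pre _ _ Q => S (size Q)
  | Ext P1 P2 => S (size P1 + size P2)
  | Par P1 _ P2 => S (size P1 + size P2)
  end.

(* Denotation with fuel (recursion on the size of terms; substitution
   preserves size). *)
Fixpoint den_fuel (n : nat) (P : term) : traceset :=
  match n with
  | O => fun _ => False
  | S n' =>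
    match P with
    | STOP => fun t => t = []
    | FAIL => fun _ => False
    | Pre x E Q => fun t =>
        match t with
        | [] => True
        | e :: t' => in_evset E e /\ den_fuel n' (subst e x Q) t'
        end
    | Ext P1 P2 => fun t => den_fuel n' P1 t \/ den_fuel n' P2 t
    | Par P1 E P2 => par_tr E (den_fuel n' P1) (den_fuel n' P2)
    end
  end.

Definition den (P : term) : traceset := den_fuel (size P) P.

(* actions: Some e = visible event e, None = tau *)
Definition action := option Sigma.

Definition in_act (E : evset) (a : action) : Prop :=
  match a with Some e => in_evset E e | None => False end.

Inductive doomed : term -> Prop :=
| D_FAIL : doomed FAIL
| D_Ext : forall D1 D2, doomed D1 -> doomed D2 -> doomed (Ext D1 D2)
| D_ParL : forall D E P, doomed D -> doomed (Par D E P)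
| D_ParR : forall P E D, doomed D -> doomed (Par P E D).

Definition viable (P : term) : Prop := ~ doomed P.

Inductive step : term -> action -> term -> Prop :=
| S1 : forall x E P e, in_evset E e -> step (Pre x E P) (Some e) (subst e x P)
| S2 : forall P P' Q, step P None P' -> step (Ext P Q) None (Ext P' Q)
| S3 : forall P Q Q', step Q None Q' -> step (Ext P Q) None (Ext P Q')
| S4 : forall P P' Q e, step P (Some e) P' -> step (Ext P Q) (Some e) P'
| S5 : forall P Q Q' e, step Q (Some e) Q' -> step (Ext P Q) (Some e) Q'
| S6 : forall P P' E Q a, step P a P' -> ~ in_act E a -> viable Q ->
         step (Par P E Q) a (Par P' E Q)
| S7 : forall P E Q Q' a, step Q a Q' -> ~ in_act E a -> viable P ->
         step (Par P E Q) a (Par P E Q')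
| S8 : forall P Q P' Q' E e, viable P -> viable Q ->
         step P (Some e) P' -> step Q (Some e) Q' -> in_evset E e ->
         step (Par P E Q) (Some e) (Par P' E Q')
| S9 : forall D1 D2 E P1, doomed D1 -> doomed D2 -> step D1 None P1 ->
         step (Par D1 E D2) None (Par P1 E D2)
| S10 : forall D1 D2 E P2, doomed D1 -> doomed D2 -> step D2 None P2 ->
         step (Par D1 E D2) None (Par D1 E P2)
| S11 : step (Ext FAIL FAIL) None FAIL
| S12 : forall E P, step (Par FAIL E P) None FAIL
| S13 : forall P E, step (Par P E FAIL) None FAIL.

Inductive wsteps : term -> trace -> term -> Prop :=
| W_refl : forall P, wsteps P [] P
| W_tau : forall P P' s Q, step P None P' -> wsteps P' s Q -> wsteps P s Q
| W_ev : forall P P' e s Q, step P (Some e) P' -> wsteps P' s Q ->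
           wsteps P (e :: s) Q.

End Calculus.

(* Main.v *)
Require Import Defs.
From Stdlib Require Import List Arith Lia.
Import ListNotations.

Section Pf.
Variable Sigma : Type.

Lemma size_subst : forall (P : term Sigma) e x, size (subst e x P) = size P.
Proof.
  induction P; intros; simpl; auto.
  destruct (Nat.eqb x n); simpl; auto.
Qed.

Lemma size_pos : forall (P : term Sigma), 1 <= size P.
Proof. destruct P; simpl; lia. Qed.

Lemma par_mono (E : evset Sigma) : forall t (T1 T2 T1' T2' : traceset Sigma),
  (forall u, T1 u -> T1' u) -> (forall u, T2 u -> T2' u) ->
  par_tr E T1 T2 t -> par_tr E T1' T2' t.
Proof.
  induction t; simpl; intros T1 T2 T1' T2' H1 H2 [[u Hu] [[v Hv] H]];
    (split; [exists u; auto | split; [exists v; auto |]]); auto.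
  destruct H as [[Hin H]|[Hn [H|H]]].
  - left; split; auto. eapply IHt; [| | exact H]; unfold after; auto.
  - right; split; auto. left. eapply IHt; [| | exact H]; unfold after; auto.
  - right; split; auto. right. eapply IHt; [| | exact H]; unfold after; auto.
Qed.

Lemma par_ne (E : evset Sigma) : forall t (T1 T2 : traceset Sigma),
  par_tr E T1 T2 t -> nonempty T1 /\ nonempty T2 /\ True.
Proof. destruct t; simpl; tauto. Qed.

Lemma fuel : forall n m (P : term Sigma) t, size P <= n -> size P <= m ->
  (den_fuel n P t <-> den_fuel m P t).
Proof.
  induction n; intros m P t Hn Hm.
  - pose proof (size_pos P); lia.
  - destruct m; [pose proof (size_pos P); lia|].
    destruct P as [| |x E Q|P1 P2|P1 E P2]; simpl in *.
    + reflexivity.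
    + reflexivity.
    + destruct t as [|e t]; [tauto|].
      assert (IH := IHn m (subst e x Q) t).
      rewrite size_subst in IH. specialize (IH ltac:(lia) ltac:(lia)). tauto.
    + assert (A := IHn m P1 t ltac:(lia) ltac:(lia)).
      assert (B := IHn m P2 t ltac:(lia) ltac:(lia)). tauto.
    + assert (A : forall u, den_fuel n P1 u <-> den_fuel m P1 u)
        by (intro; apply IHn; lia).
      assert (B : forall u, den_fuel n P2 u <-> den_fuel m P2 u)
        by (intro; apply IHn; lia).
      split; apply par_mono; firstorder.
Qed.

Lemma den_STOP : forall t, den (STOP Sigma) t <-> t = [].
Proof. intros; unfold den; simpl; tauto. Qed.

Lemma den_FAIL : forall t, den (FAIL Sigma) t <-> False.
Proof. intros; unfold den; simpl; tauto. Qed.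

Lemma den_Pre_nil : forall x E (Q : term Sigma), den (Pre x E Q) [].
Proof. intros; unfold den; simpl; exact I. Qed.

Lemma den_Pre_cons : forall x E (Q : term Sigma) e t,
  den (Pre x E Q) (e :: t) <-> in_evset E e /\ den (subst e x Q) t.
Proof. intros; unfold den; simpl. rewrite size_subst. tauto. Qed.

Lemma den_Ext : forall (P1 P2 : term Sigma) t,
  den (Ext P1 P2) t <-> den P1 t \/ den P2 t.
Proof.
  intros; unfold den; simpl.
  assert (A := fuel (size P1 + size P2) (size P1) P1 t ltac:(lia) ltac:(lia)).
  assert (B := fuel (size P1 + size P2) (size P2) P2 t ltac:(lia) ltac:(lia)).
  tauto.
Qed.

Lemma den_Par : forall (P1 P2 : term Sigma) E t,
  den (Par P1 E P2) t <-> par_tr E (den P1) (den P2) t.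
Proof.
  intros; unfold den; simpl.
  assert (A : forall u, den_fuel (size P1 + size P2) P1 u <-> den_fuel (size P1) P1 u)
    by (intro; apply fuel; lia).
  assert (B : forall u, den_fuel (size P1 + size P2) P2 u <-> den_fuel (size P2) P2 u)
    by (intro; apply fuel; lia).
  split; apply par_mono; firstorder.
Qed.

Lemma doomed_empty : forall P : term Sigma, doomed P -> forall t, ~ den P t.
Proof.
  induction 1; intros t Ht.
  - rewrite den_FAIL in Ht; auto.
  - rewrite den_Ext in Ht; destruct Ht as [Ht|Ht]; [exact (IHdoomed1 _ Ht)|exact (IHdoomed2 _ Ht)].
  - rewrite den_Par in Ht. apply par_ne in Ht. destruct Ht as [[u Hu] _]. exact (IHdoomed _ Hu).
  - rewrite den_Par in Ht. apply par_ne in Ht. destruct Ht as [_ [[u Hu] _]]. exact (IHdoomed _ Hu).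
Qed.

Lemma den_nil_or_doomed (HS : inhabited Sigma) :
  forall P : term Sigma, den P [] \/ doomed P.
Proof.
  induction P as [| |x E Q IH|P1 IH1 P2 IH2|P1 IH1 E P2 IH2].
  - left; apply den_STOP; reflexivity.
  - right; constructor.
  - left; apply den_Pre_nil.
  - destruct IH1; [left; apply den_Ext; auto|].
    destruct IH2; [left; apply den_Ext; auto|].
    right; constructor; auto.
  - destruct IH1; [|right; apply D_ParL; auto].
    destruct IH2; [|right; apply D_ParR; auto].
    left; apply den_Par; simpl. split; [exists []; auto|].
    split; [exists []; auto|]. destruct HS as [e]; exists e; auto.
Qed.

Definition cons_act (a : action Sigma) (t : trace Sigma) :=
  match a with Some e => e :: t | None => t end.

Lemma step_sound : forall (P : term Sigma) a P', step P a P' ->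
  forall t, den P' t -> den P (cons_act a t).
Proof.
  induction 1; intros t Ht; simpl in *.
  - apply den_Pre_cons; auto.
  - rewrite den_Ext in *; destruct Ht; auto.
  - rewrite den_Ext in *; destruct Ht; auto.
  - rewrite den_Ext; left; apply (IHstep t Ht).
  - rewrite den_Ext; right; apply (IHstep t Ht).
  - rewrite den_Par in *. destruct a as [e|]; simpl in *.
    + pose proof (par_ne _ _ _ _ Ht) as Ht'. destruct Ht' as [[u Hu] [[v Hv] _]].
      simpl. split; [exists (e :: u); apply IHstep; auto|].
      split; [exists v; auto|]. right; split; auto. left.
      apply par_mono with (den P') (den Q); auto.
    + apply par_mono with (den P') (den Q); auto.
  - rewrite den_Par in *. destruct a as [e|]; simpl in *.
    + pose proof (par_ne _ _ _ _ Ht) as Ht'. destruct Ht' as [[u Hu] [[v Hv] _]].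
      simpl. split; [exists u; auto|].
      split; [exists (e :: v); apply IHstep; auto|]. right; split; auto. right.
      apply par_mono with (den P) (den Q'); auto.
    + apply par_mono with (den P) (den Q'); auto.
  - rewrite den_Par in *.
    pose proof (par_ne _ _ _ _ Ht) as Ht'. destruct Ht' as [[u Hu] [[v Hv] _]].
    simpl. split; [exists (e :: u); apply IHstep1; auto|].
    split; [exists (e :: v); apply IHstep2; auto|]. left; split; auto.
    apply par_mono with (den P') (den Q'); auto.
  - rewrite den_Par in Ht. apply par_ne in Ht. destruct Ht as [_ [[v Hv] _]].
    exfalso; exact (doomed_empty _ H0 _ Hv).
  - rewrite den_Par in Ht. apply par_ne in Ht. destruct Ht as [[v Hv] _].
    exfalso; exact (doomed_empty _ H _ Hv).
  - rewrite den_FAIL in Ht; contradiction.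
  - rewrite den_FAIL in Ht; contradiction.
  - rewrite den_FAIL in Ht; contradiction.
Qed.

Lemma soundness (HS : inhabited Sigma) : forall (P : term Sigma) s M,
  wsteps P s M -> ~ doomed M -> den P s.
Proof.
  induction 1; intros HM.
  - destruct (den_nil_or_doomed HS P); tauto.
  - apply (step_sound _ _ _ H s); auto.
  - apply (step_sound _ _ _ H s); auto.
Qed.

Inductive merge (E : evset Sigma) : list Sigma -> list Sigma -> list Sigma -> Prop :=
| M_nil : forall t1 t2, merge E t1 t2 []
| M_sync : forall e t1 t2 t, in_evset E e -> merge E t1 t2 t ->
    merge E (e :: t1) (e :: t2) (e :: t)
| M_left : forall e t1 t2 t, ~ in_evset E e -> merge E t1 t2 t ->
    merge E (e :: t1) t2 (e :: t)
| M_right : forall e t1 t2 t, ~ in_evset E e -> merge E t1 t2 t ->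
    merge E t1 (e :: t2) (e :: t).

Lemma par_merge (E : evset Sigma) : forall t (T1 T2 : traceset Sigma),
  par_tr E T1 T2 t -> exists t1 t2, T1 t1 /\ T2 t2 /\ merge E t1 t2 t.
Proof.
  induction t; simpl; intros T1 T2 [[u Hu] [[v Hv] H]].
  - exists u, v; repeat split; auto; constructor.
  - destruct H as [[Hin H]|[Hn [H|H]]].
    + destruct (IHt _ _ H) as [t1 [t2 [A [B C]]]].
      exists (a :: t1), (a :: t2); repeat split; auto; constructor; auto.
    + destruct (IHt _ _ H) as [t1 [t2 [A [B C]]]].
      exists (a :: t1), t2; repeat split; auto; constructor; auto.
    + destruct (IHt _ _ H) as [t1 [t2 [A [B C]]]].
      exists t1, (a :: t2); repeat split; auto; constructor; auto.
Qed.

Lemma merge_par (HS : inhabited Sigma) (E : evset Sigma) : forall t1 t2 t,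
  merge E t1 t2 t -> forall (T1 T2 : traceset Sigma), T1 t1 -> T2 t2 ->
  par_tr E T1 T2 t.
Proof.
  induction 1; intros T1 T2 H1 H2; simpl;
    (split; [eexists; exact H1 | split; [eexists; exact H2 |]]).
  - destruct HS as [e]; exists e; auto.
  - left; split; [auto | apply IHmerge; auto].
  - right; split; [auto | left; apply IHmerge; auto].
  - right; split; [auto | right; apply IHmerge; auto].
Qed.

Lemma step_complete (HS : inhabited Sigma) : forall (P : term Sigma) e t,
  den P (e :: t) -> exists P', step P (Some e) P' /\ den P' t.
Proof.
  induction P as [| |x E Q IH|P1 IH1 P2 IH2|P1 IH1 E P2 IH2]; intros e t H.
  - rewrite den_STOP in H; discriminate.
  - rewrite den_FAIL in H; contradiction.
  - rewrite den_Pre_cons in H; destruct H.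
    exists (subst e x Q); split; auto; constructor; auto.
  - rewrite den_Ext in H; destruct H as [H|H].
    + destruct (IH1 _ _ H) as [P' [A B]]; exists P'; split; auto; apply S4; auto.
    + destruct (IH2 _ _ H) as [P' [A B]]; exists P'; split; auto; apply S5; auto.
  - rewrite den_Par in H. pose proof H as Hp.
    apply par_ne in H. destruct H as [[u Hu] [[v Hv] _]].
    assert (V1 : viable P1) by (intro D; exact (doomed_empty _ D _ Hu)).
    assert (V2 : viable P2) by (intro D; exact (doomed_empty _ D _ Hv)).
    apply par_merge in Hp. destruct Hp as [t1 [t2 [H1 [H2 Hm]]]].
    inversion Hm; subst.
    + destruct (IH1 _ _ H1) as [P1' [A1 B1]].
      destruct (IH2 _ _ H2) as [P2' [A2 B2]].
      exists (Par P1' E P2'); split; [apply S8; auto|].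
      apply den_Par; eapply merge_par; eauto.
    + destruct (IH1 _ _ H1) as [P1' [A1 B1]].
      exists (Par P1' E P2); split; [apply S6; auto|].
      apply den_Par; eapply merge_par; eauto.
    + destruct (IH2 _ _ H2) as [P2' [A2 B2]].
      exists (Par P1 E P2'); split; [apply S7; auto|].
      apply den_Par; eapply merge_par; eauto.
Qed.

Lemma completeness (HS : inhabited Sigma) : forall s (P : term Sigma),
  den P s -> exists M, wsteps P s M /\ ~ doomed M.
Proof.
  induction s as [|e s IH]; intros P H.
  - exists P; split; [constructor|]. intro D; exact (doomed_empty _ D _ H).
  - destruct (step_complete HS P e s H) as [P' [A B]].
    destruct (IH P' B) as [M [C D]].
    exists M; split; [eapply W_ev; eauto | exact D].
Qed.

End Pf.

Theorem theorem1 (Sigma : Type) (HSigma : inhabited Sigma) :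
  forall P : term Sigma, closed P ->
  forall s : list Sigma,
    den P s <-> exists M : term Sigma, wsteps P s M /\ ~ doomed M.
Proof.
  intros P _ s; split.
  - apply completeness; auto.
  - intros [M [A B]]; eapply soundness; eauto.
Qed.
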